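(* Let $k$ be a positive integer and let $n \geq (k-1)^3+1$. Then $\textup{Sav}_n(12\cdots k)=0$; that is, for every permutation $p$ of $\{1,\dots,n\}$, at least one of $p$ and $p^2$ contains the pattern $12\cdots k$.
   Context: A permutation $p$ of length $n$ is written in one-line notation $p=p_1p_2\cdots p_n$, with $p_i=p(i)$. A permutation $p$ contains a pattern $q=q_1\cdots q_k$ (itself a permutation of $\{1,\dots,k\}$) if there are indices $i_1<\cdots<i_k$ such that $p_{i_r}<p_{i_s}$ if and only if $q_r<q_s$; otherwise $p$ avoids $q$. The square $p^2$ is the composition $p^2(i)=p(p(i))$. A permutation $p$ is strongly $q$-avoiding if both $p$ and $p^2$ avoid $q$, and $\textup{Sav}_n(q)$ denotes the number of strongly $q$-avoiding permutations of length $n$. $12\cdots k$ denotes the increasing pattern of length $k$. *)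

(* Defs.v *)
From mathcomp Require Import all_boot all_fingroup.
Set Implicit Arguments. Unset Strict Implicit. Unset Printing Implicit Defensive.

(* Permutations of {1..n} are modelled as {perm 'I_n} (values 0..n-1).
   One-line notation p_1...p_n corresponds to p 0, ..., p (n-1). *)

Definition contains (n k : nat) (p : {perm 'I_n}) (q : {perm 'I_k}) : bool :=
  [exists f : {ffun 'I_k -> 'I_n},
    [forall r : 'I_k, forall s : 'I_k,
       ((r < s) ==> (f r < f s)) && ((p (f r) < p (f s)) == (q r < q s))]].

Definition avoids (n k : nat) (p : {perm 'I_n}) (q : {perm 'I_k}) : bool :=
  ~~ contains p q.

Definition psq (n : nat) (p : {perm 'I_n}) : {perm 'I_n} := (p * p)%g.

Lemma psqE (n : nat) (p : {perm 'I_n}) (i : 'I_n) : psq p i = p (p i).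
Proof. by rewrite /psq permM. Qed.

Definition incr_pat (k : nat) : {perm 'I_k} := 1%g.

Definition Sav (n k : nat) (q : {perm 'I_k}) : nat :=
  #|[set p : {perm 'I_n} | avoids p q && avoids (psq p) q]|.

(* Main.v *)
Require Import Defs.
From mathcomp Require Import all_boot all_fingroup.
From mathcomp Require Import zify.
Set Implicit Arguments. Unset Strict Implicit. Unset Printing Implicit Defensive.

Section L.
Variable n : nat.
Variable s : 'I_n -> 'I_n.

Fixpoint Lf (f : nat) (i : 'I_n) : nat :=
  if f is f'.+1 then (\max_(j : 'I_n | (j < i) && (s j < s i)) Lf f' j).+1 else 0.

Lemma Lf_stable f g (i : 'I_n) : i < f -> i < g -> Lf f i = Lf g i.
Proof.
elim: f g i => [|f IH] [|g] i //= hf hg.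
congr _.+1; apply: eq_bigr => j /andP[hj _].
apply: IH; apply: leq_trans hj _; by [].
Qed.

Definition L i := Lf n i.

Lemma LE i : L i = (\max_(j : 'I_n | (j < i) && (s j < s i)) L j).+1.
Proof.
have hn : n = n.-1.+1 by case: n i => [[]|].
rewrite /L -(_ : Lf n.-1.+1 i = Lf n i); last by rewrite -hn.
rewrite /=; congr _.+1; apply: eq_bigr => j /andP[hj _].
apply: Lf_stable => //; apply: leq_trans hj _; by rewrite -ltnS -hn.
Qed.

Lemma L_gt0 i : 0 < L i.
Proof. by rewrite LE. Qed.

Lemma L_lt (i j : 'I_n) : i < j -> s i < s j -> L i < L j.
Proof.
move=> hij hs; rewrite (LE j) ltnS.
exact: (@leq_bigmax_cond _ (fun j0 : 'I_n => (j0 < j) && (s j0 < s j)) L i (introT andP (conj hij hs))).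
Qed.

Definition rl : rel 'I_n := fun a b => (a < b) && (s a < s b).

Lemma rl_trans : transitive rl.
Proof.
move=> b a c /andP[h1 h2] /andP[h3 h4]; apply/andP; split;
  [exact: ltn_trans h1 h3 | exact: ltn_trans h2 h4].
Qed.

Lemma chain m (i : 'I_n) : m < L i ->
  exists x c, [&& path rl x c, last x c == i & size c == m].
Proof.
elim: m i => [|m IH] i h.
  by exists i, [::]; rewrite /= eqxx.
have : exists j : 'I_n, [&& (j < i), (s j < s i) & m < L j].
  apply/existsP; apply: contraLR h; rewrite negb_exists => /forallP H.
  rewrite -leqNgt LE ltnS; apply/bigmax_leqP => j /andP[h1 h2].
  by move: (H j); rewrite h1 h2 /= -leqNgt.
case=> j /and3P[h1 h2 h3].
have [x [c /and3P[hp hl hs]]] := IH j h3.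
exists x, (rcons c i); rewrite rcons_path last_rcons size_rcons hp (eqP hl) (eqP hs).
by rewrite /rl h1 h2 !eqxx.
Qed.

End L.

Lemma contains_of_L n k (p : {perm 'I_n}) i : 0 < k -> k <= L p i ->
  contains p (incr_pat k).
Proof.
move=> hk hL.
have hk' : k.-1 < L p i by rewrite prednK.
have [x [c /and3P[hp _ hs]]] := chain hk'.
apply/existsP; exists [ffun r : 'I_k => nth x (x :: c) r].
apply/forallP => r; apply/forallP => t; rewrite !ffunE /incr_pat !perm1.
have hsz : size (x :: c) = k by rewrite /= (eqP hs) prednK.
have H := sorted_ltn_nth (@rl_trans n p) x (s := x :: c) hp.
have inr : (r : nat) \in [pred n0 | n0 < size (x :: c)] by rewrite inE hsz.
have int : (t : nat) \in [pred n0 | n0 < size (x :: c)] by rewrite inE hsz.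
case: (ltngtP r t) => hrt.
- by have /andP[-> ->] := H _ _ inr int hrt.
- have /andP[_ h] := H _ _ int inr hrt.
  by rewrite /= ltnNge (ltnW h).
- by rewrite /= hrt ltnn.
Qed.

Lemma sameL n (s : {perm 'I_n}) (i j : 'I_n) : L s i = L s j -> i < j -> s j < s i.
Proof.
move=> he hij; case: (ltngtP (s i) (s j)) => h //.
- by have := L_lt hij h; rewrite he ltnn.
- have := perm_inj (val_inj h) => e; by rewrite e ltnn in hij.
Qed.

Lemma decode m a b c a' b' c' : b < m -> c < m -> b' < m -> c' < m ->
  a * m ^ 2 + b * m + c = a' * m ^ 2 + b' * m + c' -> [/\ a = a', b = b' & c = c'].
Proof.
move=> hb hc hb' hc'.
have hm : 0 < m := leq_ltn_trans (leq0n b) hb.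
have E x y z : x * m ^ 2 + y * m + z = (x * m + y) * m + z by rewrite mulnDl -mulnA.
rewrite !E => h.
have hcc : c = c'.
  by have := congr1 (modn^~ m) h; rewrite !modnMDl !modn_small.
have h2 : a * m + b = a' * m + b'.
  by have := congr1 (divn^~ m) h; rewrite !divnMDl // !divn_small // !addn0.
have hbb : b = b'.
  by have := congr1 (modn^~ m) h2; rewrite !modnMDl !modn_small.
have haa : a = a'.
  by have := congr1 (divn^~ m) h2; rewrite !divnMDl // !divn_small // !addn0.
by [].
Qed.

Lemma main k n (hk : 0 < k) (hn : (k - 1) ^ 3 + 1 <= n) (p : {perm 'I_n}) :
  contains p (incr_pat k) || contains (psq p) (incr_pat k).
Proof.
apply/negPn/negP; rewrite negb_or => /andP[h1 h2].
have B1 i : L p i < k by rewrite ltnNge; apply: contra h1 => h; exact: contains_of_L h.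
have B2 i : L (psq p) i < k by rewrite ltnNge; apply: contra h2 => h; exact: contains_of_L h.
set m := k - 1.
have hB (x : nat) : 0 < x -> x < k -> x.-1 < m by rewrite /m; lia.
pose code (i : 'I_n) := (L p i).-1 * m ^ 2 + (L (psq p) i).-1 * m + (L p (p i)).-1.
have codeP i : code i < m ^ 3.
  have ha := hB _ (L_gt0 p i) (B1 i).
  have hb := hB _ (L_gt0 (psq p) i) (B2 i).
  have hc := hB _ (L_gt0 p (p i)) (B1 (p i)).
  rewrite /code.
  move: ha hb hc; set a := (L p i).-1; set b := (L (psq p) i).-1; set c := (L p (p i)).-1.
  move=> ha hb hc.
  rewrite !expnS expn0 !muln1; nia.
pose F := fun i => Ordinal (codeP i).
have Finj : injective F.
  move=> i j /(congr1 val) /= e.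
  have [e1 e2 e3] := decode
    (hB _ (L_gt0 (psq p) i) (B2 i)) (hB _ (L_gt0 p (p i)) (B1 (p i)))
    (hB _ (L_gt0 (psq p) j) (B2 j)) (hB _ (L_gt0 p (p j)) (B1 (p j))) e.
  have P x y : 0 < x -> 0 < y -> x.-1 = y.-1 -> x = y by lia.
  have {e1}e1 := P _ _ (L_gt0 _ _) (L_gt0 _ _) e1.
  have {e2}e2 := P _ _ (L_gt0 _ _) (L_gt0 _ _) e2.
  have {e3}e3 := P _ _ (L_gt0 _ _) (L_gt0 _ _) e3.
  have K (a b : 'I_n) : L p a = L p b -> L (psq p) a = L (psq p) b ->
      L p (p a) = L p (p b) -> ~ a < b.
    move=> f1 f2 f3 hab.
    have q1 := sameL f1 hab.
    have q2 := sameL f2 hab; rewrite !psqE in q2.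
    have q3 := sameL (esym f3) q1.
    by have := ltn_trans q2 q3; rewrite ltnn.
  case: (ltngtP i j) => h.
  - by case: (K _ _ e1 e2 e3 h).
  - by case: (K _ _ (esym e1) (esym e2) (esym e3) h).
  - exact: val_inj.
have := leq_card F Finj; rewrite !card_ord => h.
have := leq_trans hn h; rewrite addn1 ltnn //.
Qed.

Theorem theorem2p1 (k n : nat) (hk : 0 < k) (hn : (k - 1) ^ 3 + 1 <= n) :
  Sav n (incr_pat k) = 0 /\
  (forall p : {perm 'I_n}, contains p (incr_pat k) || contains (psq p) (incr_pat k)).
Proof.
split; last by move=> p; exact: main.
apply/eqP; rewrite cards_eq0; apply/eqP/setP => p; rewrite !inE /avoids.
by rewrite -negb_or (main hk hn p).
Qed.
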